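(* Let $G=(V,E)$ be a simple graph on $n$ vertices and let $\bar G$ be its complement. Then $\varepsilon(G)$ is at most the number of acyclic orientations of the edges of $\bar G$. Equality holds if and only if $G$ is a complete $p$-partite graph for some $p\in[n]$.
   Context: For an undirected simple graph $G=(V,E)$, $\varepsilon(G)$ denotes the maximum, over all acyclic orientations of $E$, of the number of linear extensions of the partial order induced on $V$ (where $u<v$ iff there is a directed path from $u$ to $v$; a linear extension of a poset on an $n$-element set is an order-preserving bijection onto $[n]$). A complete $p$-partite graph is one whose vertex set is partitioned into $p$ nonempty parts, with two vertices adjacent iff they lie in different parts. *)

(* Defs.v *)
From mathcomp Require Import all_boot.
Set Implicit Arguments. Unset Strict Implicit. Unset Printing Implicit Defensive.

Section Graphs.
Variable V : finType.

Definition simple_graph (E : rel V) : Prop :=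
  symmetric E /\ irreflexive E.

Definition compl_graph (E : rel V) : rel V :=
  fun u v => (u != v) && ~~ E u v.

Definition is_orientation (E : rel V) (A : {set V * V}) : bool :=
  [forall u, forall v, ((u, v) \in A) ==> E u v] &&
  [forall u, forall v, E u v ==> (((u, v) \in A) (+) ((v, u) \in A))].

Definition arcs (A : {set V * V}) : rel V := fun x y => (x, y) \in A.

Definition acyclic (A : {set V * V}) : bool :=
  [forall u, forall v, ((u, v) \in A) ==> ~~ connect (arcs A) v u].

Definition acyclic_orientations (E : rel V) : {set {set V * V}} :=
  [set A | is_orientation E A && acyclic A].

Definition induced_lt (A : {set V * V}) : rel V :=
  fun u v => [exists w, arcs A u w && connect (arcs A) w v].

(* Linear extensions: order-preserving bijections V -> [n], n = #|V|
   (injective maps between sets of equal size are bijections). *)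
Definition linear_extensions (A : {set V * V}) : {set {ffun V -> 'I_#|V|}} :=
  [set f : {ffun V -> 'I_#|V|} | injectiveb f &&
     [forall u, forall v, induced_lt A u v ==> (f u < f v)]].

Definition num_linext (A : {set V * V}) : nat := #|linear_extensions A|.

Definition eps (E : rel V) : nat :=
  \max_(A in acyclic_orientations E) num_linext A.

Definition num_acyclic_orientations (E : rel V) : nat :=
  #|acyclic_orientations E|.

(* Complete p-partite: V partitioned into p nonempty parts (given by a
   surjective colouring c : V -> 'I_p), adjacency iff different parts. *)
Definition complete_multipartite (E : rel V) (p : nat) : Prop :=
  exists c : V -> 'I_p,
    (forall i : 'I_p, exists v, c v = i) /\
    (forall u v, E u v = (c u != c v)).

End Graphs.

(* Main.v *)
Require Import Defs.
From mathcomp Require Import all_boot.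
Set Implicit Arguments. Unset Strict Implicit. Unset Printing Implicit Defensive.

Lemma connect_mono (T : finType) (r : rel T) (h : T -> nat) :
  (forall x y, r x y -> h x < h y) -> forall x y, connect r x y -> h x <= h y.
Proof.
move=> hr x y /connectP [p pth ->]; elim: p x pth => //= z p IH x /andP [rxz pth].
exact: leq_trans (ltnW (hr _ _ rxz)) (IH _ pth).
Qed.

Lemma card_lt_ord n (k : nat) : k <= n -> #|[set i : 'I_n | i < k]| = k.
Proof.
move=> kn.
have -> : [set i : 'I_n | i < k] = widen_ord kn @: [set: 'I_k].
  apply/setP => i; rewrite inE; apply/idP/imsetP.
  - move=> ik; exists (Ordinal ik) => //; exact: val_inj.
  - by case=> j _ ->; rewrite /= ltn_ord.
rewrite card_imset ?cardsT ?card_ord // => a b /(congr1 val) /= e; exact: val_inj.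
Qed.

Lemma rank_ffun (V : finType) (f : {ffun V -> 'I_#|V|}) : injective f ->
  forall u, (f u : nat) = #|[set v | f v < f u]|.
Proof.
move=> finj u.
have fsurj : forall i, exists v, f v = i.
  move=> i; have : i \in codom f by apply: inj_card_onto; rewrite ?card_ord.
  by move/codomP => [v ->]; exists v.
rewrite -(card_imset _ finj).
have -> : f @: [set v | f v < f u] = [set i : 'I_#|V| | i < f u].
  apply/setP => i; rewrite inE; apply/imsetP/idP.
  - by case=> v; rewrite inE => h ->.
  - move=> h; have [v fv] := fsurj i; exists v => //; by rewrite inE fv.
by rewrite card_lt_ord // ltnW.
Qed.

Lemma total_order_linext (V : finType) (R : rel V) : irreflexive R -> transitive R ->
  (forall x y, x != y -> R x y || R y x) ->
  exists f : {ffun V -> 'I_#|V|}, injective f /\ forall x y, (f x < f y) = R x y.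
Proof.
move=> Rirr Rtr Rtot.
pose rk x := #|[set y | R y x]|.
have rk_lt : forall x y, R x y -> rk x < rk y.
  move=> x y Rxy; apply: proper_card; apply/properP; split.
  - apply/subsetP => z; rewrite !inE => Rzx; exact: (Rtr _ _ _ Rzx Rxy).
  - by exists x; rewrite !inE ?Rxy ?Rirr.
have rk_bound : forall x, rk x < #|V|.
  move=> x; rewrite /rk -cardsT; apply: proper_card; apply/properP; split; first exact: subsetT.
  by exists x; rewrite !inE ?Rirr.
pose f : {ffun V -> 'I_#|V|} := [ffun x => Ordinal (rk_bound x)].
have flt : forall x y, (f x < f y) = R x y.
  move=> x y; rewrite !ffunE /=; apply/idP/idP; last exact: rk_lt.
  move=> h; case: (eqVneq x y) => [exy|nxy]; first by move: h; rewrite exy ltnn.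
  case/orP: (Rtot _ _ nxy) => // Ryx; have := rk_lt _ _ Ryx; by rewrite ltnNge (ltnW h).
exists f; split => //.
move=> x y e; case: (eqVneq x y) => // nxy; case/orP: (Rtot _ _ nxy); by rewrite -flt e ltnn.
Qed.

Section Main.
Variable V : finType.
Variable E : rel V.
Hypothesis Esym : symmetric E.
Hypothesis Eirr : irreflexive E.

Definition orient (g : V -> nat) : {set V * V} :=
  [set x : V * V | compl_graph E x.1 x.2 && (g x.1 < g x.2)].

Lemma orient_ao g : injective g -> orient g \in acyclic_orientations (compl_graph E).
Proof.
move=> ginj; rewrite inE; apply/andP; split.
- apply/andP; split; apply/forallP => u; apply/forallP => v.
  + by apply/implyP; rewrite inE => /andP [].
  + apply/implyP => huv; rewrite !inE /= huv.
    have -> : compl_graph E v u by move: huv; rewrite /compl_graph eq_sym Esym.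
    have : g u != g v by apply/eqP => /ginj e; move: huv; rewrite /compl_graph e eqxx.
    rewrite neq_ltn => /orP [] h; first by rewrite h ltnNge ltnW.
    by rewrite h ltnNge ltnW.
- apply/forallP => u; apply/forallP => v; apply/implyP; rewrite inE => /andP [_ huv].
  apply/negP => /(connect_mono (h:=g)) H.
  have := H (fun x y => ltac:(rewrite /arcs inE => /andP [] //)).
  by rewrite leqNgt huv.
Qed.

Definition phi (f : {ffun V -> 'I_#|V|}) := orient (fun x => nat_of_ord (f x)).

Lemma phi_inj A : is_orientation E A -> {in linear_extensions A &, injective phi}.
Proof.
move=> /andP [_ /forallP Aor] f g; rewrite !inE => /andP [/injectiveP finj fle] /andP [/injectiveP ginj gle] e.
have ilt : forall a b, (a,b) \in A -> induced_lt A a b.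
  by move=> a b ab; apply/existsP; exists b; rewrite /arcs ab connect0.
have key : forall x y, (f x < f y) = (g x < g y).
  move=> x y; case: (eqVneq x y) => [->|nxy]; first by rewrite !ltnn.
  case Exy : (E x y).
  - have := implyP (forallP (Aor x) y) Exy.
    case hxy: ((x,y) \in A) => /=.
    + have h1 := implyP (forallP (forallP fle x) y) (ilt _ _ hxy).
      have h2 := implyP (forallP (forallP gle x) y) (ilt _ _ hxy).
      by rewrite h1 h2.
    + move=> hyx.
      have h1 := implyP (forallP (forallP fle y) x) (ilt _ _ hyx).
      have h2 := implyP (forallP (forallP gle y) x) (ilt _ _ hyx).
      by rewrite ltnNge (ltnW h1) ltnNge (ltnW h2).
  - have : ((x,y) \in phi f) = ((x,y) \in phi g) by rewrite e.
    by rewrite /phi /orient !inE /compl_graph /= nxy Exy.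
apply/ffunP => x; apply: val_inj; rewrite /= (rank_ffun finj x) (rank_ffun ginj x).
by apply: eq_card => y; rewrite !inE key.
Qed.

Lemma phi_ao A f : f \in linear_extensions A -> phi f \in acyclic_orientations (compl_graph E).
Proof.
rewrite inE => /andP [/injectiveP finj _]; apply: orient_ao => x y /= /val_inj; exact: finj.
Qed.

Lemma linext_le A : A \in acyclic_orientations E ->
  num_linext A <= num_acyclic_orientations (compl_graph E).
Proof.
rewrite inE => /andP [Aor _].
rewrite /num_linext /num_acyclic_orientations -(card_in_imset (phi_inj Aor)).
apply: subset_leq_card; apply/subsetP => O /imsetP [f fL ->]; exact: phi_ao fL.
Qed.


Lemma linext_lt A a v b : A \in acyclic_orientations E -> (a,b) \in A ->
  ~~ E a v -> ~~ E v b -> a != v -> v != b ->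
  num_linext A < num_acyclic_orientations (compl_graph E).
Proof.
move=> AAO ab nav nvb av vb.
move: (AAO); rewrite inE => /andP [Aor _].
have ab' : a != b.
  move: Aor => /andP [/forallP H _]; have := implyP (forallP (H a) b) ab.
  by apply: contraTneq => ->; rewrite Eirr.
pose g x := if x == b then 0 else if x == v then 1 else if x == a then 2
            else (enum_rank x).+3.
have ginj : injective g.
  move=> x y; rewrite /g.
  repeat (case: ifP => [/eqP->|_]) => //.
  by move=> [] /val_inj /enum_rank_inj.
pose O := orient g.
have OAO : O \in acyclic_orientations (compl_graph E) := orient_ao ginj.
have Onot : O \notin phi @: linear_extensions A.
  apply/imsetP => [[f fL eO]].
  move: fL; rewrite inE => /andP [_ fle].
  have ilt : induced_lt A a b by apply/existsP; exists b; rewrite /arcs ab connect0.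
  have h1 := implyP (forallP (forallP fle a) b) ilt.
  have h2 : (b, v) \in phi f.
    rewrite -eO /O /orient inE /compl_graph /= eq_sym vb Esym nvb /g eqxx.
    by rewrite (negbTE vb) eqxx.
  have h3 : (v, a) \in phi f.
    rewrite -eO /O /orient inE /compl_graph /= eq_sym av Esym nav /g.
    by rewrite (negbTE vb) eqxx (negbTE ab') (negbTE av) eqxx.
  move: h2 h3; rewrite /phi /orient !inE /= => /andP [_ h2] /andP [_ h3].
  by move: (ltn_trans h2 (ltn_trans h3 h1)); rewrite ltnn.
rewrite /num_linext /num_acyclic_orientations -(card_in_imset (phi_inj Aor)).
rewrite [X in _ < X](cardsD1 O) OAO add1n ltnS; apply: subset_leq_card; apply/subsetP => P hP.
rewrite in_setD1; apply/andP; split.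
  by apply: contraNneq Onot => <-.
by move/imsetP: hP => [f fL ->]; exact: phi_ao fL.
Qed.

Lemma A0_ao p (c : V -> 'I_p) (hE : forall u v, E u v = (c u != c v)) :
  [set x : V * V | c x.1 < c x.2] \in acyclic_orientations E.
Proof.
rewrite inE; apply/andP; split; [apply/andP; split|].
- apply/forallP => u; apply/forallP => v; apply/implyP; rewrite inE /= hE => h.
  by rewrite neq_ltn h.
- apply/forallP => u; apply/forallP => v; apply/implyP; rewrite hE neq_ltn !inE /=.
  by case/orP => h; rewrite h ltnNge ltnW.
- apply/forallP => u; apply/forallP => v; apply/implyP; rewrite inE /= => h.
  apply/negP => /(connect_mono (h := fun x => nat_of_ord (c x))) H.
  have := H (fun x y => ltac:(rewrite /arcs inE //)).
  by rewrite leqNgt h.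
Qed.

Lemma multi_surj p (c : V -> 'I_p) (hE : forall u v, E u v = (c u != c v)) O :
  O \in acyclic_orientations (compl_graph E) ->
  O \in phi @: linear_extensions [set x : V * V | c x.1 < c x.2].
Proof.
rewrite inE => /andP [/andP [/forallP Oarc /forallP Oor] /forallP Oac].
have Oarc' : forall x y, (x,y) \in O -> (x != y) && (c x == c y).
  move=> x y h; have := implyP (forallP (Oarc x) y) h; by rewrite /compl_graph hE negbK.
have Oor' : forall x y, x != y -> c x == c y -> ((x,y) \in O) (+) ((y,x) \in O).
  move=> x y nxy cxy; apply: (implyP (forallP (Oor x) y)); by rewrite /compl_graph hE negbK nxy cxy.
have Oac' : forall x y, (x,y) \in O -> ~~ connect (arcs O) y x.
  move=> x y; exact: (implyP (forallP (Oac x) y)).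
pose R := [rel x y | (c x < c y) || ((c x == c y) && ((x,y) \in O))].
have Rirr : irreflexive R.
  move=> x; rewrite /R /= ltnn eqxx /=; apply/negP => /Oarc'; by rewrite eqxx.
have Rtot : forall x y, x != y -> R x y || R y x.
  move=> x y nxy; rewrite /R /=; case: (ltngtP (c x) (c y)) => cxy; rewrite ?orbT //.
  have e : c x == c y by apply/eqP; apply: val_inj.
  rewrite e eq_sym e /=; have := Oor' x y nxy e.
  by case: ((x,y) \in O); case: ((y,x) \in O).
have Rtr : transitive R.
  move=> y x z; rewrite /R /=.
  case/orP => [h1|/andP [e1 o1]]; case/orP => [h2|/andP [e2 o2]].
  - by rewrite (ltn_trans h1 h2).
  - by rewrite -(eqP e2) h1.
  - by rewrite (eqP e1) h2.
  - have nxz : x != z.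
      apply/eqP => exz; subst z.
      by move: (Oac' _ _ o1); rewrite (connect1 (o2 : arcs O y x)).
    have cxz : c x == c z by rewrite (eqP e1).
    rewrite cxz /=; have := Oor' x z nxz cxz.
    case: ((x,z) \in O); rewrite ?orbT //= => hzx.
    move: (Oac' _ _ o1).
    by rewrite (connect_trans (connect1 (o2 : arcs O y z)) (connect1 (hzx : arcs O z x))).
have [f [finj fR]] := total_order_linext Rirr Rtr Rtot.
apply/imsetP; exists f.
- rewrite inE; apply/andP; split; first by apply/injectiveP.
  apply/forallP => x; apply/forallP => y; apply/implyP => /existsP [w /andP [hxw hwy]].
  rewrite fR /R /=.
  have h1 : c x < c w by move: hxw; rewrite /arcs inE.
  have h2 : c w <= c y.
    apply: (connect_mono (r := arcs [set x : V * V | c x.1 < c x.2])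
      (h := fun x => nat_of_ord (c x))) hwy => a b; by rewrite /arcs inE.
  by rewrite (leq_trans h1 h2).
- apply/setP => [[x y]]; rewrite /phi /orient inE /= fR /R /= /compl_graph hE negbK.
  case h: ((x,y) \in O).
  + by move: (Oarc' _ _ h) => /andP [-> ->]; rewrite orbT.
  + rewrite andbF orbF; case e: (c x == c y); rewrite ?andbF //.
    by rewrite (eqP e) ltnn andbF.
Qed.

End Main.
Unset Implicit Arguments.

Theorem proposition4p7 (V : finType) (E : rel V) :
  simple_graph E -> 0 < #|V| ->
  eps E <= num_acyclic_orientations (compl_graph E) /\
  (eps E = num_acyclic_orientations (compl_graph E) <->
   exists p, 1 <= p <= #|V| /\ complete_multipartite E p).
Proof.
move=> [Esym Eirr] Vpos.
have le : eps E <= num_acyclic_orientations (compl_graph E).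
  by apply/bigmax_leqP => A hA; exact: linext_le.
split => //; split.
- move=> heq.
  case: (boolP [forall u, forall v, forall w, ~~ E u v ==> ~~ E v w ==> ~~ E u w]) => [htr|].
  + have tr : forall x y z, ~~ E x y -> ~~ E y z -> ~~ E x z.
      move=> x y z h1 h2.
      exact: implyP (implyP (forallP (forallP (forallP htr x) y) z) h1) h2.
    have /card_gt0P [x0 _] := Vpos.
    pose cls x := [set y | ~~ E x y].
    pose P := cls @: [set: V].
    have Hx0 : cls x0 \in P by apply: imset_f; rewrite inE.
    have clsE : forall u v, (cls u == cls v) = ~~ E u v.
      move=> u v; apply/eqP/idP => [h|h].
      * have : u \in cls v by rewrite -h inE Eirr.
        by rewrite inE Esym.
      * apply/setP => y; rewrite !inE; apply/idP/idP => h'.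
        - by apply: tr h'; rewrite Esym.
        - exact: tr h h'.
    exists #|P|; split.
      apply/andP; split; first by apply/card_gt0P; exists (cls x0).
      by rewrite -cardsT leq_imset_card.
    exists (fun x => enum_rank_in Hx0 (cls x)); split.
    * move=> i; have := enum_valP i; rewrite -/P => /imsetP [x _ hx].
      by exists x; rewrite -hx enum_valK_in.
    * move=> u v.
      have ceq : (enum_rank_in Hx0 (cls u) == enum_rank_in Hx0 (cls v)) = (cls u == cls v).
        apply/eqP/eqP => [h|->//].
        by rewrite -(enum_rankK_in Hx0 (imset_f cls (in_setT u))) h enum_rankK_in // imset_f.
      by rewrite ceq clsE negbK.
  + rewrite negb_forall => /existsP [u]; rewrite negb_forall => /existsP [v].
    rewrite negb_forall => /existsP [w].
    rewrite negb_imply => /andP [nuv]; rewrite negb_imply negbK => /andP [nvw Euw].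
    exfalso.
    have uv : u != v by apply: contraNneq nvw => <-; rewrite Euw.
    have vw : v != w by apply: contraNneq nuv => ->; rewrite Euw.
    have m0 : 0 < num_acyclic_orientations (compl_graph E).
      apply/card_gt0P; exists (orient E (fun x => nat_of_ord (enum_rank x))).
      apply: orient_ao => // x y /val_inj; exact: enum_rank_inj.
    have : eps E < num_acyclic_orientations (compl_graph E).
      rewrite -(prednK m0) ltnS; apply/bigmax_leqP => A hA.
      rewrite -ltnS prednK //.
      move: (hA); rewrite inE => /andP [/andP [_ /forallP Aor] _].
      have := implyP (forallP (Aor u) w) Euw.
      case hx: ((u,w) \in A) => /=.
      * move=> _; exact: (linext_lt Esym Eirr hA hx nuv nvw uv vw).
      * move=> hy; apply: (linext_lt (v:=v) Esym Eirr hA hy); rewrite 1?Esym 1?eq_sym //.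
    by rewrite heq ltnn.
- move=> [p [_ [c [_ hE]]]].
  apply/eqP; rewrite eqn_leq le /=.
  have hA0 := A0_ao hE.
  apply: leq_trans (leq_bigmax_cond _ hA0).
  rewrite /num_linext /num_acyclic_orientations.
  apply: leq_trans (leq_imset_card (phi E) _).
  apply: subset_leq_card; apply/subsetP => O hO; exact: multi_surj.
Qed.
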